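(* Let $\mathcal{R}$ be a tolerance relation on $X=\{1,\dots,n\}$ with chordal graph $G(\mathcal{R})$ and set of maximal cliques $\mathcal{C}$, and let $\Phi:E(\mathcal{R})^d\to\bigoplus_{C\in\mathcal{C}}M_{|C|}(\mathbb{C})$, $(x_{ij})\mapsto((x_{ij})_{i,j\in C})_{C\in\mathcal{C}}$. Then the $C^*$-algebra generated by $\Phi(E(\mathcal{R})^d)$ is all of $\bigoplus_{C\in\mathcal{C}}M_{|C|}(\mathbb{C})$.
   Context: A tolerance relation on $X=\{1,\dots,n\}$ is a reflexive symmetric relation $\mathcal{R}\subseteq X\times X$; its graph $G(\mathcal{R})$ has vertex set $X$ and an edge between distinct $i,j$ iff $(i,j)\in\mathcal{R}$. A graph is chordal if every cycle of length at least 4 has a chord. $E(\mathcal{R})=\{(x_{ij})\in M_n(\mathbb{C})\mid x_{ij}=0\text{ if }(i,j)\notin\mathcal{R}\}$, and the dual operator system $E(\mathcal{R})^d$ is identified as a vector space with $E(\mathcal{R})$. Matrices in the $C$-component of the direct sum are indexed by $C$. *)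

(* Defs.v *)
From mathcomp Require Import all_boot all_order all_algebra.
From mathcomp Require Import complex Rstruct.
Set Implicit Arguments. Unset Strict Implicit. Unset Printing Implicit Defensive.
Import Order.TTheory GRing.Theory Num.Theory.
Local Open Scope ring_scope.

Definition CC : numClosedFieldType := (Rdefinitions.R)[i]%C.
Definition conjCC (z : CC) : CC := conjc z.

Section Tolerance.
Variable n : nat.
(* X = {1,...,n} is represented by 'I_n = {0,...,n-1}. *)
Variable Rl : rel 'I_n.

Definition tolerance : Prop := reflexive Rl /\ symmetric Rl.

Definition gadj (i j : 'I_n) : bool := (i != j) && Rl i j.

Definition is_gcycle (c : seq 'I_n) : bool :=
  [&& (4 <= size c)%N, uniq c & cycle gadj c].

Definition has_chord (c : seq 'I_n) : Prop :=
  exists x y, [/\ x \in c, y \in c, gadj x y, y != next c x & x != next c y].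

Definition chordal : Prop := forall c, is_gcycle c -> has_chord c.

Definition clique (C : {set 'I_n}) : bool :=
  [forall i in C, forall j in C, Rl i j].
Definition maxclique (C : {set 'I_n}) : bool :=
  clique C && [forall D : {set 'I_n}, clique D ==> ~~ (C \proper D)].

Definition in_ER (x : 'M[CC]_n) : Prop := forall i j, ~~ Rl i j -> x i j = 0.

(* The direct sum  (+)_{C maximal clique} M_{|C|}(CC) is modelled as families
   y : {ffun {set 'I_n} -> 'M[CC]_n} such that, for each maximal clique C,
   the block y C is supported on C x C (i.e. it is a matrix indexed by C),
   and y C = 0 when C is not a maximal clique. *)
Definition DS := {ffun {set 'I_n} -> 'M[CC]_n}.

Definition in_DS (y : DS) : Prop :=
  forall C, if maxclique C
            then forall i j, ~~ ((i \in C) && (j \in C)) -> y C i j = 0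
            else y C = 0.

Definition DSadd (y z : DS) : DS := [ffun C => y C + z C].
Definition DSscale (a : CC) (y : DS) : DS := [ffun C => a *: y C].
Definition DSmul (y z : DS) : DS := [ffun C => y C *m z C].
Definition DSadj (y : DS) : DS := [ffun C => (map_mx conjCC (y C))^T].

Definition Phi (x : 'M[CC]_n) : DS :=
  [ffun C => if maxclique C
             then \matrix_(i, j) (if (i \in C) && (j \in C) then x i j else 0)
             else 0].

(* the *-subalgebra of the direct sum generated by Phi(E(R)); since
   everything is finite dimensional it is norm closed, i.e. it is the
   C*-algebra generated by Phi(E(R)). *)
Inductive gen_cstar : DS -> Prop :=
| gen_base x : in_ER x -> gen_cstar (Phi x)
| gen_add y z : gen_cstar y -> gen_cstar z -> gen_cstar (DSadd y z)
| gen_scale a y : gen_cstar y -> gen_cstar (DSscale a y)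
| gen_mul y z : gen_cstar y -> gen_cstar z -> gen_cstar (DSmul y z)
| gen_adj y : gen_cstar y -> gen_cstar (DSadj y).
End Tolerance.

(* Main.v *)
Require Import Defs.
From mathcomp Require Import all_boot all_order all_algebra.
From mathcomp Require Import complex Rstruct.
Set Implicit Arguments. Unset Strict Implicit. Unset Printing Implicit Defensive.
Import Order.TTheory GRing.Theory Num.Theory.
Local Open Scope ring_scope.

Section Proofs.
Variable n : nat.
Variable Rl : rel 'I_n.

Lemma gen_in_DS (y : DS n) : gen_cstar Rl y -> in_DS Rl y.
Proof.
elim=> {y} [x _|y z _ Hy _ Hz|a y _ Hy|y z _ Hy _ Hz|y _ Hy] C.
- rewrite ffunE; case: (maxclique Rl C) => // i j H; rewrite mxE.
  by rewrite (negbTE H).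
- move: (Hy C) (Hz C); rewrite ffunE; case: (maxclique Rl C).
  + by move=> H1 H2 i j H; rewrite mxE H1 // H2 // addr0.
  + by move=> -> ->; rewrite addr0.
- move: (Hy C); rewrite ffunE; case: (maxclique Rl C).
  + by move=> H1 i j H; rewrite mxE H1 // mulr0.
  + by move=> ->; rewrite scaler0.
- move: (Hy C) (Hz C); rewrite ffunE; case: (maxclique Rl C).
  + move=> H1 H2 i j H; rewrite mxE; apply: big1 => k _.
    case: (boolP (i \in C)) => iC.
    * rewrite (H2 k j) ?mulr0 //; apply: contra H => /andP[_ ->].
      by rewrite iC.
    * by rewrite H1 ?mul0r // (negbTE iC).
  + by move=> -> _; rewrite mul0mx.
- move: (Hy C); rewrite ffunE; case: (maxclique Rl C).
  + move=> H1 i j H; rewrite !mxE H1; first by rewrite /conjCC rmorph0.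
    by rewrite andbC.
  + move=> ->; apply/matrixP=> i j; rewrite !mxE /conjCC rmorph0.
    by [].
Qed.

Lemma Phi_delta (a b : 'I_n) D :
  Phi Rl (delta_mx a b) D =
  if maxclique Rl D && (a \in D) && (b \in D) then delta_mx a b else 0.
Proof.
rewrite ffunE; case: (maxclique Rl D) => //=.
apply/matrixP=> i j; rewrite !mxE.
case: (boolP ((a \in D) && (b \in D))) => HD; rewrite ?mxE;
  case: (eqVneq i a) => [ei|ne1]; case: (eqVneq j b) => [ej|ne2];
  rewrite ?ei ?ej ?(negbTE HD) ?HD ?andbF ?andbT //=; by case: ifP.
Qed.

Fixpoint pp (a : 'I_n) (s : seq 'I_n) : DS n :=
  if s is b :: s' then DSmul (Phi Rl (delta_mx a b)) (pp b s')
  else Phi Rl (delta_mx a a).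

Lemma ppE a s D : pp a s D =
  if maxclique Rl D && (a \in D) && all (fun x => x \in D) s then delta_mx a (last a s)
  else 0.
Proof.
elim: s a => [|b s IH] a /=.
  by rewrite Phi_delta andbT -andbA andbb.
rewrite ffunE IH Phi_delta.
case: (maxclique Rl D) => /=; last by rewrite mul0mx.
case: (a \in D) => /=; last by rewrite mul0mx.
case: (b \in D) => /=; last by rewrite mul0mx.
by case: (all _ _); rewrite ?mul_delta_mx ?mulmx0.
Qed.

Lemma in_ER_delta a b : Rl a b -> in_ER Rl (delta_mx a b).
Proof.
move=> Hab i j H; rewrite mxE.
case: (eqVneq i a) => [ei|]; case: (eqVneq j b) => [ej|] //=.
by move: H; rewrite ei ej Hab.
Qed.

Lemma pp_gen C a s : clique Rl C -> a \in C -> all (fun x => x \in C) s ->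
  gen_cstar Rl (pp a s).
Proof.
move=> /forallP cl; elim: s a => [|b s IH] a aC /=.
  by constructor; apply: in_ER_delta; move: (cl a) => /implyP/(_ aC)/forallP/(_ a)/implyP/(_ aC).
move=> /andP[bC sC]; constructor; last exact: IH.
by constructor; apply: in_ER_delta; move: (cl a) => /implyP/(_ aC)/forallP/(_ b)/implyP/(_ bC).
Qed.

Lemma maxclique_eq C D : maxclique Rl C -> maxclique Rl D -> C \subset D -> D = C.
Proof.
move=> /andP[_ /forallP mC] /andP[cD _] sCD.
move: (mC D); rewrite cD /= properE sCD /= negbK => sDC.
by apply/eqP; rewrite eqEsubset sDC sCD.
Qed.

Definition unitE (C : {set 'I_n}) (A : 'M[CC]_n) : DS n :=
  [ffun D => if D == C then A else 0].

Lemma gen0 : gen_cstar Rl 0.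
Proof.
have -> : (0 : DS n) = Phi Rl 0.
  apply/ffunP=> D; rewrite !ffunE; case: ifP => // _.
  by apply/matrixP=> i j; rewrite !mxE; case: ifP.
by constructor => i j _; rewrite mxE.
Qed.

Lemma genD y z : gen_cstar Rl y -> gen_cstar Rl z -> gen_cstar Rl (y + z).
Proof.
move=> Hy Hz; have -> : y + z = DSadd y z by apply/ffunP=> D; rewrite !ffunE.
by constructor.
Qed.

Lemma gen_sum (I : finType) (F : I -> DS n) :
  (forall i, gen_cstar Rl (F i)) -> gen_cstar Rl (\sum_i F i).
Proof.
move=> H; apply: (big_ind (gen_cstar Rl)) => //; [exact: gen0|exact: genD].
Qed.

Lemma gen_unit_delta C i j : maxclique Rl C -> i \in C -> j \in C ->
  gen_cstar Rl (unitE C (delta_mx i j)).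
Proof.
move=> mC iC jC.
have cC : clique Rl C by case/andP: mC.
have -> : unitE C (delta_mx i j) = pp i (enum C ++ [:: j]).
  apply/ffunP=> D; rewrite ffunE ppE last_cat /=.
  case: (eqVneq D C) => [->|neq].
    rewrite mC iC all_cat /= jC andbT /=.
    by have -> : all (fun x => x \in C) (enum C) by apply/allP=> x; rewrite mem_enum.
  case mD: (maxclique Rl D) => //=.
  case: (i \in D) => //=; rewrite all_cat /= andbT.
  case: (j \in D); rewrite ?andbF //= andbT.
  case aD: (all _ _) => //.
  have sCD : C \subset D.
    by apply/subsetP=> x xC; move/allP: aD => /(_ x); rewrite mem_enum; apply.
  by move: neq; rewrite (maxclique_eq mC mD sCD) eqxx.
apply: (pp_gen cC iC); apply/allP=> x; rewrite mem_cat => /orP[|].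
  by rewrite mem_enum.
by rewrite inE => /eqP ->.
Qed.

Lemma gen_unit C (A : 'M[CC]_n) : maxclique Rl C ->
  (forall i j, ~~ ((i \in C) && (j \in C)) -> A i j = 0) ->
  gen_cstar Rl (unitE C A).
Proof.
move=> mC HA.
have -> : unitE C A = \sum_i \sum_j unitE C (A i j *: delta_mx i j).
  apply/ffunP=> D; rewrite ffunE sum_ffunE.
  under eq_bigr => i _ do rewrite sum_ffunE.
  case: eqP => [->|ne]; first by rewrite {1}(matrix_sum_delta A);
    apply: eq_bigr => i _; apply: eq_bigr => j _; rewrite ffunE eqxx.
  by rewrite big1 // => i _; rewrite big1 // => j _; rewrite ffunE; case: eqP.
apply: gen_sum => i; apply: gen_sum => j.
case: (boolP ((i \in C) && (j \in C))) => [/andP[iC jC]|H].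
  have -> : unitE C (A i j *: delta_mx i j) = DSscale (A i j) (unitE C (delta_mx i j)).
    by apply/ffunP=> D; rewrite !ffunE; case: eqP; rewrite ?scaler0.
  by constructor; apply: gen_unit_delta.
have -> : unitE C (A i j *: delta_mx i j) = 0.
  by apply/ffunP=> D; rewrite !ffunE HA // scale0r; case: eqP.
exact: gen0.
Qed.

Lemma in_DS_gen y : in_DS Rl y -> gen_cstar Rl y.
Proof.
move=> Hy.
have -> : y = \sum_C unitE C (y C).
  apply/ffunP=> D; rewrite sum_ffunE (bigD1 D) //= big1 ?addr0.
    by rewrite ffunE eqxx.
  by move=> C /negbTE nC; rewrite ffunE eq_sym nC.
apply: gen_sum => C; move: (Hy C); case: ifP => mC.
  by move=> H; apply: gen_unit.
move=> ->; have -> : unitE C 0 = 0 by apply/ffunP=> D; rewrite !ffunE; case: eqP.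
exact: gen0.
Qed.

End Proofs.

Theorem mainTheorem5 (n : nat) (Rl : rel 'I_n) :
  tolerance Rl -> chordal Rl ->
  forall y : DS n, gen_cstar Rl y <-> in_DS Rl y.
Proof.
move=> _ _ y; split; [exact: gen_in_DS|exact: in_DS_gen].
Qed.
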